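(* Let $n,k,r,\ell$ be positive integers. Then \[S_{\geq \ell}(n,k,r)=\sum_{i=\ell-1}^{n-1}\binom{n-1}{i}\Big((k-1)\,S_{\geq \ell}(n-i-1,k-1,r)+S_{\geq \ell}(n-i-1,k,r-1)\Big),\] where the term $(k-1)S_{\geq \ell}(n-i-1,k-1,r)$ is $0$ when $k=1$.
   Context: For integers $N\ge 0$, $k\ge1$, $r\ge 0$, $\ell\ge1$, $S_{\geq \ell}(N,k,r)$ is the number of ways to partition $[N]=\{1,\dots,N\}$ into $r+k-1$ non-empty blocks, each of size at least $\ell$, where $r$ of the blocks receive the label $1$ (blocks with label $1$ are indistinguishable among themselves) and the remaining $k-1$ blocks receive the distinct labels $2,3,\dots,k$. (In particular $S_{\geq\ell}(0,1,0)=1$.) *)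

(* Defs.v *)
From mathcomp Require Import all_boot.
Set Implicit Arguments. Unset Strict Implicit. Unset Printing Implicit Defensive.

(* Sge l N k r = S_{>= l}(N,k,r): the number of pairs (P, L) where
   - P is a set partition of [N] = 'I_N (blocks non-empty, pairwise disjoint,
     covering) into exactly r + (k-1) blocks, each of size >= l;
   - L assigns to each of the labels 2,...,k (indexed by 'I_(k-1)) a distinct
     block of P (L injective, values in P).
   The remaining r blocks of P are those labelled 1 (indistinguishable).
   Only meaningful for k >= 1 (k.-1 = k - 1). *)
Definition Sge (l N k r : nat) : nat :=
  #|[set PL : {set {set 'I_N}} * {ffun 'I_k.-1 -> {set 'I_N}} |
      [&& partition PL.1 [set: 'I_N],
          [forall B in PL.1, l <= #|B|],
          #|PL.1| == r + k.-1,
          injectiveb PL.2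
        & [forall j, PL.2 j \in PL.1]]]|.

(* Main.v *)
Require Import Defs.
From mathcomp Require Import all_boot.
From mathcomp Require Import zify.
Set Implicit Arguments. Unset Strict Implicit. Unset Printing Implicit Defensive.

Section Aux.
Variable l : nat.

Definition Qs (T : finType) (D : {set T}) c :=
  [set P : {set {set T}} | [&& partition P D, [forall B in P, l <= #|B|] & #|P| == c]].

Lemma Sge_Qs N k r : Sge l N k r = #|Qs [set: 'I_N] (r + k.-1)| * (r + k.-1) ^_ k.-1.
Proof.
rewrite /Sge -sum1_card.
set A := [set _ | _].
rewrite (eq_bigl (fun p => predT p.1 && (p.2 \in [set L | (p.1, L) \in A]))); last first.
  by move=> p; rewrite [in RHS]inE /= -surjective_pairing.
rewrite -(pair_big_dep predT (fun P L => L \in [set L | (P, L) \in A]) (fun _ _ => 1)) /=.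
rewrite -sum1_card big_distrl /= [RHS]big_mkcond /=.
apply: eq_bigr => P _.
rewrite sum1_card inE.
case: (boolP [&& partition P [set: 'I_N], [forall B in P, l <= #|B|] & #|P| == r + k.-1]).
  case/and3P=> pP fP /eqP cP; rewrite -cP -[k.-1 in RHS]card_ord -card_inj_ffuns_on.
  rewrite mul1n; apply: eq_card => L; rewrite !inE /= pP fP cP eqxx /= andbC; congr (_ && _).
move=> H; apply: eq_card0 => L; rewrite !inE /=.
apply/negP => /and5P[h1 h2 h3 _ _]; case/negP: H; by rewrite h1 h2 h3.
Qed.


Definition Bs (T : finType) (D : {set T}) (x0 : T) :=
  [set B : {set T} | [&& B \subset D, x0 \in B & l <= #|B|]].

Lemma setUDK (T : finType) (B D : {set T}) : B \subset D -> B :|: (D :\: B) = D.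
Proof.
move/subsetP=> sBD; apply/setP=> x; rewrite !inE.
by case: (boolP (x \in B)) => [/sBD -> | _] //=.
Qed.

Lemma Qs_rec (T : finType) (D : {set T}) x0 c : x0 \in D ->
  #|Qs D c.+1| = \sum_(B in Bs D x0) #|Qs (D :\: B) c|.
Proof.
move=> x0D.
rewrite -sum1_card (partition_big (fun P => pblock P x0) (fun B => B \in Bs D x0)); last first.
  move=> P; rewrite !inE => /and3P[pP /forallP fP _].
  have cx0 : x0 \in cover P by rewrite (cover_partition pP).
  have bP := pblock_mem cx0.
  by rewrite (partitionS pP bP) mem_pblock cx0 /=; move: (fP (pblock P x0)); rewrite bP.
apply: eq_bigr => B. rewrite inE => /and3P[sBD x0B lB].
rewrite sum1dep_card.
have B0 : B != set0 by apply/set0Pn; exists x0.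
rewrite -(@card_in_imset _ _ (fun P' => B |: P') (Qs (D :\: B) c)); last first.
  move=> P1 P2; rewrite !inE => /and3P[p1 _ _] /and3P[p2 _ _] e.
  have nB : forall P, partition P (D :\: B) -> B \notin P.
    move=> P pP; apply/negP => BP; move: (partitionS pP BP) => /subsetP/(_ x0 x0B).
    by rewrite inE x0B.
  by rewrite -(setU1K (nB _ p1)) e setU1K // nB.
apply: eq_card => P; rewrite !inE; apply/idP/imsetP.
  case/andP=> /and3P[pP /forallP fP /eqP cP] /eqP pb.
  have cx0 : x0 \in cover P by rewrite (cover_partition pP).
  have BP : B \in P by rewrite -pb pblock_mem.
  exists (P :\ B); last by rewrite setD1K.
  rewrite !inE partitionD1 //=; apply/andP; split.
    by apply/forallP => C; apply/implyP => /setD1P[_ CP]; move: (fP C); rewrite CP.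
  by move: cP; rewrite (cardsD1 B P) BP add1n => -[->].
move=> [P' ]; rewrite inE => /and3P[pP /forallP fP /eqP cP] ->.
have nB : B \notin P'.
  apply/negP => BP; move: (partitionS pP BP) => /subsetP/(_ x0 x0B).
  by rewrite inE x0B.
have pU : partition (B |: P') D.
  rewrite -{1}(setUDK sBD) partitionU1 //.
  by rewrite -setI_eq0; apply/eqP/setP => x; rewrite !inE; case: (x \in B).
apply/andP; split; first (apply/and3P; split => //).
- apply/forallP => C; apply/implyP => /setU1P[-> // | CP]; move: (fP C); by rewrite CP.
- by rewrite cardsU1 nB cP.
by rewrite (@def_pblock _ _ B _ (partition_trivIset pU)) ?setU11.
Qed.


Lemma card_Bsize (T : finType) (D : {set T}) x0 N i : x0 \in D -> #|D| = N.+1 ->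
  #|[set B : {set T} | [&& B \subset D, x0 \in B & #|B| == i.+1]]| = 'C(N, i).
Proof.
move=> x0D cD.
have cD1 : #|D :\ x0| = N by move: cD; rewrite (cardsD1 x0 D) x0D add1n => -[].
rewrite -cD1 -cards_draws -(@card_in_imset _ _ (fun A => x0 |: A) [set A : {set T} | A \subset D :\ x0 & #|A| == i]); last first.
  move=> A1 A2; rewrite !inE => /andP[s1 _] /andP[s2 _] e.
  have n1 : x0 \notin A1 by apply/negP => /(subsetP s1); rewrite !inE eqxx.
  have n2 : x0 \notin A2 by apply/negP => /(subsetP s2); rewrite !inE eqxx.
  by rewrite -(setU1K n1) e setU1K.
apply: eq_card => B; rewrite inE; apply/idP/imsetP.
  case/and3P=> sBD x0B /eqP cB; exists (B :\ x0); last by rewrite setD1K.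
  rewrite inE; apply/andP; split; first by apply: setSD.
  by move: cB; rewrite (cardsD1 x0 B) x0B add1n => -[->].
case=> A; rewrite inE => /andP[sA /eqP cA] ->.
have nA : x0 \notin A by apply/negP => /(subsetP sA); rewrite !inE eqxx.
rewrite setU11 cardsU1 nA cA eqxx /=; apply/andP; split => //.
apply/subsetP => y /setU1P[-> // | /(subsetP sA)]; by rewrite inE => /andP[].
Qed.

Lemma group_sum (T : finType) (D : {set T}) x0 N (F : nat -> nat) :
  x0 \in D -> #|D| = N.+1 ->
  \sum_(B in Bs D x0) F #|B| = \sum_(l.-1 <= i < N.+1) 'C(N, i) * F i.+1.
Proof.
move=> x0D cD.
rewrite big_geq_mkord /=.
rewrite [LHS](@partition_big _ _ _ _ _ _ (fun B => B \in Bs D x0) (fun B : {set T} => (inord #|B|.-1 : 'I_N.+1)) (fun i : 'I_N.+1 => l.-1 <= i)); last first.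
  move=> B; rewrite inE => /and3P[sBD _ lB].
  have := subset_leq_card sBD; rewrite cD => le.
  rewrite inordK; lia.
apply: eq_bigr => i li.
rewrite -(card_Bsize i x0D cD) -sum_nat_const.
rewrite [RHS]big_mkcond /= [LHS]big_mkcond /=.
apply: eq_bigr => B _; rewrite !inE.
case: (boolP (B \subset D)) => sBD //=; case: (boolP (x0 \in B)) => x0B //=.
have := subset_leq_card sBD; rewrite cD => le.
have B1 : 0 < #|B| by apply/card_gt0P; exists x0.
have ie : (inord #|B|.-1 == i) = (#|B| == i.+1).
  apply/eqP/eqP => [<- | ->]; last by apply/val_inj; rewrite /= inordK.
  rewrite inordK; lia.
rewrite ie; case: (boolP (#|B| == i.+1)) => /eqP e; rewrite ?andbT ?andbF //.
rewrite e ifT //; lia.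
Qed.


Lemma Qs0 (T : finType) c : #|Qs (set0 : {set T}) c| = (c == 0).
Proof.
case: c => [|c].
  apply: (eq_card1 (x:=set0)) => P; rewrite !inE partition_set0.
  apply/idP/idP => [/andP[-> _] //|/eqP ->]; rewrite eqxx cards0 eqxx andbT /=.
  by apply/forallP => B; rewrite inE.
apply: eq_card0 => P; rewrite !inE partition_set0.
by apply/negP => /and3P[/eqP -> _]; rewrite cards0.
Qed.

Lemma Qs_ne0 (T : finType) (D : {set T}) : D != set0 -> #|Qs D 0| = 0.
Proof.
move=> nD; apply: eq_card0 => P; rewrite !inE; apply/negP => /and3P[pP _ /eqP/cards0_eq P0].
move: pP; rewrite P0 => /cover_partition; rewrite /cover big_set0 => e.
by move: nD; rewrite -e eqxx.
Qed.

Lemma step_eq N c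
  (IH : forall M, M <= N -> forall (T : finType) (D : {set T}) c,
          #|D| = M -> #|Qs D c| = #|Qs [set: 'I_M] c|)
  (T : finType) (D : {set T}) : #|D| = N.+1 ->
  #|Qs D c.+1| = \sum_(l.-1 <= i < N.+1) 'C(N, i) * #|Qs [set: 'I_(N.+1 - i.+1)] c|.
Proof.
move=> cD.
have [x0 x0D] : exists x0, x0 \in D by apply/card_gt0P; rewrite cD.
rewrite (Qs_rec _ x0D) -(group_sum (fun s => #|Qs [set: 'I_(N.+1 - s)] c|) x0D cD).
apply: eq_bigr => B; rewrite inE => /and3P[sBD x0B _].
have B1 : 0 < #|B| by apply/card_gt0P; exists x0.
have le := subset_leq_card sBD.
apply: IH; last by rewrite cardsD (setIidPr sBD) cD.
lia.
Qed.

Lemma transport N : forall M, M <= N -> forall (T : finType) (D : {set T}) c,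
  #|D| = M -> #|Qs D c| = #|Qs [set: 'I_M] c|.
Proof.
elim: N => [|N IH] M.
  rewrite leqn0 => /eqP -> T D c /cards0_eq ->.
  have -> : [set: 'I_0] = set0 by apply/cards0_eq; rewrite cardsT card_ord.
  by rewrite !Qs0.
rewrite leq_eqVlt => /orP[/eqP -> | ltM]; last exact: IH.
move=> T D [|c] cD.
  rewrite !Qs_ne0 //; apply/set0Pn.
    by exists ord0; rewrite inE.
  by apply/card_gt0P; rewrite cD.
by rewrite (step_eq c IH cD) (@step_eq N c IH _ [set: 'I_N.+1]) // cardsT card_ord.
Qed.

Lemma ffact_pascal c m : c.+1 ^_ m = m * c ^_ m.-1 + c ^_ m.
Proof.
case: m => [|m] //=.
rewrite ffactSS ffactnSr.
case: (leqP m c) => h.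
  rewrite -(subnKC h) addKn; set X := _ ^_ m; nia.
by rewrite ffact_small // !muln0.
Qed.

End Aux.

Theorem mainTheorem8 (n k r l : nat) :
  0 < n -> 0 < k -> 0 < r -> 0 < l ->
  Sge l n k r =
  \sum_(l.-1 <= i < n)
     'C(n.-1, i) * ((k.-1) * Sge l (n - i - 1) k.-1 r + Sge l (n - i - 1) k r.-1).
Proof.
move=> n0 k0 r0 l0.
case: n n0 => // N _; case: r r0 => // r' _; case: k k0 => // k' _.
rewrite Sge_Qs /= addSn (step_eq _ (fun M h => @transport l N M h)) ?cardsT ?card_ord //.
rewrite big_distrl /=; apply: eq_bigr => i _.
rewrite !Sge_Qs /= -subnDA addn1 -mulnA; congr (_ * _).
case: k' => [|m].
  by rewrite /= !mul0n add0n !addn0 !muln1.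
rewrite -addSnnS ffact_pascal /=. lia.
Qed.
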